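(* In the split CP-RPCA sampling model described in the context, suppose the test location $(i_\ast,j_\ast)$ satisfies $(i_\ast,j_\ast)\mid\Omega_{\mathrm{obs}}\sim\mathrm{Unif}(\Omega_{\mathrm{obs}}^{c})$. Let $n_{\mathrm{cal}}=|\Omega_{\mathrm{cal}}'|$ and write $\Omega_{\mathrm{cal}}'\cup\{(i_\ast,j_\ast)\}=\{(i_1,j_1),\ldots,(i_{n_{\mathrm{cal}}+1},j_{n_{\mathrm{cal}}+1})\}$. Then for every $k\in\{1,\ldots,n_{\mathrm{cal}}+1\}$, $$\mathbb{P}\big\{(i_\ast,j_\ast)=(i_k,j_k)\ \big|\ \Omega_{\mathrm{cal}}'\cup\{(i_\ast,j_\ast)\}=\{(i_1,j_1),\ldots,(i_{n_{\mathrm{cal}}+1},j_{n_{\mathrm{cal}}+1})\},\ \Omega_{\mathrm{tr}}\big\}=\omega_{i_kj_k},$$ where $\omega_{i_kj_k}=h_{i_kj_k}\big/\sum_{k'=1}^{n_{\mathrm{cal}}+1}h_{i_{k'}j_{k'}}$ and $h_{ij}=(1-p_{ij})/p_{ij}$ are the odds ratios.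
   Context: Let $d_1,d_2\ge1$ and $[d]=\{1,\ldots,d\}$. Observation indicators $Z_{ij}\sim\mathrm{Bern}(p_{ij})$ are independent over $(i,j)\in[d_1]\times[d_2]$, with nonzero probabilities $p_{ij}$; the observed set is $\Omega_{\mathrm{obs}}=\{(i,j):Z_{ij}=1\}$ and $\Omega_{\mathrm{obs}}^c$ is its complement in $[d_1]\times[d_2]$. Given a splitting proportion $q\in(0,1)$, independent $W_{ij}\sim\mathrm{Bern}(q)$ (independent of $Z$) split the observed set into a training set $\Omega_{\mathrm{tr}}=\{(i,j)\in\Omega_{\mathrm{obs}}:W_{ij}=1\}$ and a calibration set $\Omega_{\mathrm{cal}}=\{(i,j)\in\Omega_{\mathrm{obs}}:W_{ij}=0\}$. In the paper's sampling model, each element of $\Omega_{\mathrm{cal}}$ is independently (of everything else) flagged as contaminated with probability $\beta\in(0,1)$ and discarded; the discarded elements form $\Omega_{\mathrm{drop}}$ and the remaining ones form the trimmed calibration set $\Omega_{\mathrm{cal}}'$, so $\Omega_{\mathrm{cal}}=\Omega_{\mathrm{cal}}'\cup\Omega_{\mathrm{drop}}$. *)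

(* Defs.v *)
From mathcomp Require Import all_boot all_order all_algebra.
Set Implicit Arguments. Unset Strict Implicit. Unset Printing Implicit Defensive.
Import Order.TTheory GRing.Theory Num.Theory.
Local Open Scope ring_scope.

Definition idx (d1 d2 : nat) : finType := ('I_d1 * 'I_d2)%type.

(* An outcome: (Z, W, D, test location).  Z = observation indicators,
   W = training/calibration split indicators, D = contamination (drop) flags
   (only relevant on Omega_cal), and the test location (i_star, j_star). *)
Definition outcome (d1 d2 : nat) : finType :=
  ({ffun idx d1 d2 -> bool} * {ffun idx d1 d2 -> bool} * {ffun idx d1 d2 -> bool}
   * idx d1 d2)%type.

Section Model.
Variables (R : realFieldType) (d1 d2 : nat).
Variables (p : idx d1 d2 -> R) (q beta : R).

Definition oZ (w : outcome d1 d2) := w.1.1.1.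
Definition oW (w : outcome d1 d2) := w.1.1.2.
Definition oD (w : outcome d1 d2) := w.1.2.
Definition otest (w : outcome d1 d2) := w.2.

Definition Omega_obs (w : outcome d1 d2) : {set idx d1 d2} := [set x | oZ w x].
Definition Omega_obs_c (w : outcome d1 d2) : {set idx d1 d2} := [set x | ~~ oZ w x].
Definition Omega_tr (w : outcome d1 d2) : {set idx d1 d2} :=
  [set x | oZ w x && oW w x].
Definition Omega_cal (w : outcome d1 d2) : {set idx d1 d2} :=
  [set x | oZ w x && ~~ oW w x].
Definition Omega_drop (w : outcome d1 d2) : {set idx d1 d2} :=
  [set x | oZ w x && ~~ oW w x && oD w x].
Definition Omega_calt (w : outcome d1 d2) : {set idx d1 d2} :=
  [set x | oZ w x && ~~ oW w x && ~~ oD w x].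

Definition bern (a : R) (b : bool) : R := if b then a else 1 - a.

Definition mass (w : outcome d1 d2) : R :=
  (\prod_(x : idx d1 d2) bern (p x) (oZ w x)) *
  (\prod_(x : idx d1 d2) bern q (oW w x)) *
  (\prod_(x : idx d1 d2) bern beta (oD w x)) *
  (if otest w \in Omega_obs_c w then (#|Omega_obs_c w|%:R)^-1 else 0).

Definition Pr (E : pred (outcome d1 d2)) : R := \sum_(w | E w) mass w.

Definition condPr (A B : pred (outcome d1 d2)) : R :=
  Pr (predI A B) / Pr B.

Definition odds (x : idx d1 d2) : R := (1 - p x) / p x.

End Model.

(* Main.v *)
Require Import Defs.
From mathcomp Require Import all_boot all_order all_algebra perm.
From mathcomp Require Import ring.
Import Order.TTheory GRing.Theory Num.Theory.
Local Open Scope ring_scope.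

Lemma prod_swap (R : comNzRingType) (I : finType) (g : I -> bool -> R) (f : I -> bool) (k k' : I) :
  k != k' ->
  (\prod_x g x (f (tperm k k' x))) * g k (f k) * g k' (f k') =
  (\prod_x g x (f x)) * g k (f k') * g k' (f k).
Proof.
move=> nkk'.
rewrite (bigD1 k) //= (bigD1 k') //= 1?eq_sym //.
rewrite [\prod_x g x (f x)](bigD1 k) //= [\prod_(i | i != k) g i (f i)](bigD1 k') //= 1?eq_sym //.
rewrite tpermL tpermR.
under eq_bigr => i /andP [h1 h2] do rewrite tpermD 1?eq_sym //.
ring.
Qed.

Definition swp {d1 d2 : nat} (t : {perm idx d1 d2}) (w : outcome d1 d2) : outcome d1 d2 :=
  ([ffun x => oZ w (t x)], [ffun x => oW w (t x)], [ffun x => oD w (t x)], t (otest w)).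

Lemma sigK d1 d2 (k k' : idx d1 d2) : involutive (swp (tperm k k')).
Proof.
case=> [[[Z W] D] t]; rewrite /swp /oZ /oW /oD /otest /=.
congr (_, _, _, _); rewrite ?tpermK //; apply/ffunP => x; rewrite !ffunE tpermK //.
Qed.

Lemma prod_perm (R : comNzRingType) (I : finType) (t : {perm I}) (F : I -> R) :
  \prod_x F (t x) = \prod_x F x.
Proof. by rewrite [RHS](reindex_inj (@perm_inj _ t)). Qed.

Lemma mass_swp (R : realFieldType) d1 d2 (p : idx d1 d2 -> R) q beta (k k' : idx d1 d2) w :
  k != k' -> otest w = k -> oZ w k' ->
  mass p q beta (swp (tperm k k') w) * ((1 - p k) * p k') =
  mass p q beta w * (p k * (1 - p k')).
Proof.
move=> nkk' ht hz.
set t := tperm k k'.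
have hW : \prod_x bern q (oW (swp t w) x) = \prod_x bern q (oW w x).
  rewrite /oW /=; under eq_bigr do rewrite ffunE; exact: prod_perm.
have hD : \prod_x bern beta (oD (swp t w) x) = \prod_x bern beta (oD w x).
  rewrite /oD /=; under eq_bigr do rewrite ffunE; exact: prod_perm.
have hobs : Omega_obs_c (swp t w) = t @^-1: Omega_obs_c w.
  by apply/setP => x; rewrite !inE /oZ /= ffunE.
have hcard : #|Omega_obs_c (swp t w)| = #|Omega_obs_c w|.
  by rewrite hobs card_preimset //; exact: perm_inj.
have hin : (otest (swp t w) \in Omega_obs_c (swp t w)) = (otest w \in Omega_obs_c w).
  by rewrite hobs inE /otest /= tpermK.
rewrite /mass hW hD hcard hin.
case hzk: (oZ w k).
  by rewrite ht inE hzk /= !mulr0 !mul0r.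
have := @prod_swap _ _ (fun x b => bern (p x) b) (oZ w) k k' nkk'.
rewrite hzk hz /= => hP.
have -> : \prod_x bern (p x) (oZ (swp t w) x) = \prod_x bern (p x) (oZ w (t x)).
  by rewrite /oZ /=; under eq_bigr do rewrite ffunE.
rewrite /bern /= in hP.
move: hP; set A := \prod_x bern (p x) (oZ w (t x)); set B := \prod_x bern (p x) (oZ w x).
set C := \prod_x bern q (oW w x); set D := \prod_x bern beta (oD w x).
set E := (if _ then _ else _).
move=> hP.
transitivity ((A * (1 - p k) * p k') * C * D * E); first ring.
rewrite hP; ring.
Qed.

Lemma swp_inj d1 d2 (k k' : idx d1 d2) : injective (swp (tperm k k')).
Proof. apply: inv_inj; exact: sigK. Qed.

Lemma preim_eq (I : finType) (k k' : I) (A S : {set I}) :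
  tperm k k' @^-1: S = S -> (tperm k k' @^-1: A == S) = (A == S).
Proof.
move=> hS; apply/eqP/eqP => [h|->//]; apply/setP => x.
move/setP/(_ (tperm k k' x)): h; rewrite !inE tpermK => ->.
by move/setP/(_ x): hS; rewrite inE.
Qed.

Lemma preim_fix (I : finType) (k k' : I) (S : {set I}) :
  (k \in S) = (k' \in S) -> tperm k k' @^-1: S = S.
Proof.
move=> h; apply/setP => x; rewrite inE.
by case: tpermP => [->|->|//]; rewrite h.
Qed.

Lemma swp_B d1 d2 (k k' : idx d1 d2) (S T : {set idx d1 d2}) w :
  k \in S -> k' \in S -> k \notin T -> k' \notin T ->
  ((otest (swp (tperm k k') w) == k') &&
   ((Omega_calt (swp (tperm k k') w) :|: [set otest (swp (tperm k k') w)] == S) &&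
    (Omega_tr (swp (tperm k k') w) == T)))
  = ((otest w == k) && ((Omega_calt w :|: [set otest w] == S) && (Omega_tr w == T))).
Proof.
move=> kS k'S kT k'T.
set t := tperm k k'.
have e1 : otest (swp t w) = t (otest w) by [].
have e2 : (t (otest w) == k') = (otest w == k).
  by rewrite -[k' in LHS](tpermL k k') (inj_eq perm_inj).
have e3 : Omega_calt (swp t w) :|: [set otest (swp t w)] =
          t @^-1: (Omega_calt w :|: [set otest w]).
  apply/setP => x; rewrite !inE /oZ /oW /oD /otest /= !ffunE; congr (_ || _).
  by rewrite -(inj_eq (@perm_inj _ t)) tpermK.
have e4 : Omega_tr (swp t w) = t @^-1: Omega_tr w.
  by apply/setP => x; rewrite !inE /oZ /oW /= !ffunE.
rewrite e1 e2 e3 e4 !preim_eq //; apply: preim_fix.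
  by rewrite (negbTE kT) (negbTE k'T).
by rewrite kS k'S.
Qed.

Theorem lemma1 (R : realFieldType) (d1 d2 : nat)
  (p : idx d1 d2 -> R) (q beta : R)
  (hd1 : (1 <= d1)%N) (hd2 : (1 <= d2)%N)
  (hp : forall x, 0 < p x <= 1)
  (hq : 0 < q < 1) (hbeta : 0 < beta < 1)
  (S T : {set idx d1 d2}) (k : idx d1 d2) (hk : k \in S)
  (hpos : 0 < Pr p q beta
            (fun w => (Omega_calt w :|: [set otest w] == S) && (Omega_tr w == T))) :
  condPr p q beta (fun w => otest w == k)
    (fun w => (Omega_calt w :|: [set otest w] == S) && (Omega_tr w == T))
  = odds p k / \sum_(x in S) odds p x.
Proof.
pose B := (fun w : outcome d1 d2 => (Omega_calt w :|: [set otest w] == S) && (Omega_tr w == T)).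
pose F j := Pr p q beta (predI (fun w => otest w == j) B).
have pn0 : forall x, p x != 0 by move=> x; case/andP: (hp x) => h _; rewrite gt_eqF.
have [w0 /andP[hB0 hm0]] : exists w, B w && (mass p q beta w != 0).
  case: (boolP [exists w, B w && (mass p q beta w != 0)]) => [/existsP//|/existsPn H].
  exfalso; move: hpos; rewrite /Pr big1 ?ltxx // => w Bw.
  by move: (H w); rewrite /B Bw /= negbK => /eqP.
have hST : forall x, x \in S -> x \notin T.
  move=> x; move/andP: hB0 => [/eqP <- /eqP <-]; rewrite !inE.
  case/orP => [/andP[/andP[_ nW] _]| /eqP ->]; first by rewrite (negbTE nW) andbF.
  have : otest w0 \in Omega_obs_c w0.
    by move: hm0; rewrite /mass; case: ifP => // _; rewrite mulr0 eqxx.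
  by rewrite inE => /negbTE ->.
have hswap : forall j j', j \in S -> j' \in S -> j != j' ->
    F j' * ((1 - p j) * p j') = F j * (p j * (1 - p j')).
  move=> j j' jS j'S njj'.
  rewrite /F /Pr [in LHS](reindex_inj (@swp_inj d1 d2 j j')) /=.
  rewrite (eq_bigl _ _ (fun w => @swp_B d1 d2 j j' S T w jS j'S (hST _ jS) (hST _ j'S))).
  rewrite !mulr_suml /B; apply: eq_bigr => w /andP[/eqP ht /andP[/eqP hS' _]].
  apply: mass_swp => //.
  move: j'S; rewrite -hS' !inE ht [j' == j]eq_sym (negbTE njj') orbF.
  by case/andP => /andP[].
have hpart : Pr p q beta B = \sum_(j in S) F j.
  rewrite /Pr (partition_big (fun w => otest w) (fun j => j \in S)).
    by apply: eq_bigr => j _; apply: eq_bigl => w; rewrite /= andbC.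
  by move=> w /andP[/eqP <- _]; rewrite !inE eqxx orbT.
have hzero : forall j, p j = 1 -> F j = 0.
  move=> j hj; apply: big1 => w /andP[/eqP ht _]; rewrite /mass.
  case: ifP => hin; last by rewrite mulr0.
  rewrite (bigD1 j) //=.
  have -> : oZ w j = false by move: hin; rewrite inE ht => /negbTE.
  by rewrite /bern hj subrr !mul0r.
have hge0 : forall x, 0 <= odds p x.
  move=> x; rewrite /odds; case/andP: (hp x) => h0 h1.
  by rewrite divr_ge0 // ?subr_ge0 // ltW.
have hkey : F k * \sum_(x in S) odds p x = odds p k * Pr p q beta B.
  rewrite hpart mulr_sumr mulr_sumr; apply: eq_bigr => j jS.
  case: (eqVneq k j) => [<-|nkj]; first by rewrite mulrC.
  have h := hswap k j hk jS nkj.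
  have pk := pn0 k; have pj := pn0 j.
  have -> : F k * odds p j = F k * (p k * (1 - p j)) / (p k * p j).
    by rewrite /odds; field; rewrite pk pj.
  have -> : odds p k * F j = F j * ((1 - p k) * p j) / (p k * p j).
    by rewrite /odds; field; rewrite pk pj.
  by rewrite h.
rewrite /condPr -/B -/(F k).
have PBn0 : Pr p q beta B != 0 by rewrite gt_eqF.
case: (eqVneq (\sum_(x in S) odds p x) 0) => hs.
  have ok0 : odds p k = 0.
    apply/eqP; rewrite eq_le hge0 andbT -hs (bigD1 k) //= lerDl.
    by apply: sumr_ge0 => x _; apply: hge0.
  have pk1 : p k = 1.
    move: ok0; rewrite /odds => /eqP; rewrite mulf_eq0 invr_eq0 (negbTE (pn0 k)) orbF.
    by rewrite subr_eq0 => /eqP <-.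
  by rewrite hzero // hs invr0 !mul0r mulr0.
by apply/eqP; rewrite eqr_div // hkey.
Qed.
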